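(* Let $\gamma>1$ and $\alpha^2>0$ be constants and $P=\mathrm{diag}(\alpha^2,\tfrac{\gamma-1}{2},\tfrac{\gamma-1}{2},1)$. On a rectangular grid with nodes $(x_i,y_j)$, $i=1,\dots,N$, $j=1,\dots,M$, let $D_x=P_x^{-1}Q_x$ ($N\times N$) and $D_y=P_y^{-1}Q_y$ ($M\times M$) be one-dimensional summation-by-parts (SBP) operators, i.e. $P_x,P_y$ are diagonal positive definite and $Q_x+Q_x^T=B_x:=\mathrm{diag}(-1,0,\dots,0,1)$, $Q_y+Q_y^T=B_y:=\mathrm{diag}(-1,0,\dots,0,1)$. Set $\mathbf{D_x}=I_4\otimes D_x\otimes I_M$, $\mathbf{D_y}=I_4\otimes I_N\otimes D_y$, $\tilde{\mathbf P}=I_4\otimes P_x\otimes P_y$, $\mathbf P=P\otimes I_N\otimes I_M$, $\mathbf{B_x}=I_4\otimes B_x\otimes P_y$, $\mathbf{B_y}=I_4\otimes P_x\otimes B_y$. Let $\vec\Phi(t)=(\vec\Phi_1^T,\dots,\vec\Phi_4^T)^T\in\mathbb{R}^{4NM}$, where $\vec\Phi_k$ collects nodal values approximating $\phi_k$ and the entries of $\vec\Phi_1$ are nonzero. For a $4\times4$ matrix function $A$ of the nodal values of $\Phi=(\phi_1,\dots,\phi_4)$ with entries $a_{kl}$, let $\mathbf A$ denote the $4NM\times4NM$ block matrix whose $(k,l)$ block is $\mathrm{diag}\big(a_{kl}(x_1,y_1),\dots,a_{kl}(x_N,y_M)\big)$ (nodal values, in the same ordering as $\vec\Phi_k$). Apply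 this with $u=\phi_2/\phi_1$, $v=\phi_3/\phi_1$ to $$A_1=\frac12\begin{bmatrix}u&0&0&0\\0&u&0&0\\0&0&u&0\\0&2(\gamma-1)\frac{\phi_4}{\phi_1}&0&(2-\gamma)u\end{bmatrix},\quad A_2=\frac12\begin{bmatrix}u&0&0&0\\0&u&0&4\frac{\phi_4}{\phi_1}\\0&0&u&0\\0&0&0&(2-\gamma)u\end{bmatrix},$$ $$B_1=\frac12\begin{bmatrix}v&0&0&0\\0&v&0&0\\0&0&v&0\\0&0&2(\gamma-1)\frac{\phi_4}{\phi_1}&(2-\gamma)v\end{bmatrix},\quad B_2=\frac12\begin{bmatrix}v&0&0&0\\0&v&0&0\\0&0&v&4\frac{\phi_4}{\phi_1}\\0&0&0&(2-\gamma)v\end{bmatrix},$$ obtaining $\mathbf{A_1},\mathbf{A_2},\mathbf{B_1},\mathbf{B_2}$. If $\vec\Phi$ is a differentiable solution of the semi-discrete scheme $$\vec\Phi_t+\mathbf{D_x}(\mathbf{A_1}\vec\Phi)+\mathbf{A_2}\mathbf{D_x}\vec\Phi+\mathbf{D_y}(\mathbf{B_1}\vec\Phi)+\mathbf{B_2}\mathbf{D_y}\vec\Phi=0,$$ then, with $\tilde{\mathbf A}=2\mathbf P\mathbf{A_1}$ and $\tilde{\mathbf B}=2\mathbf P\mathbf{B_1}$, $$\frac{d}{dt}\,\vec\Phi^T(\mathbf P\tilde{\mathbf P})\vec\Phi+\vec\Phi^T\big(\mathbf{B_x}\tilde{\mathbf A}+\mathbf{B_y}\tilde{\mathbf B}\big)\vec\Phi=0,$$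 i.e. the discrete energy $\vec\Phi^T(\mathbf P\tilde{\mathbf P})\vec\Phi$ changes only through boundary terms.
   Context: The variables $\phi_1,\phi_2,\phi_3,\phi_4$ correspond to $\sqrt{\rho},\sqrt{\rho}u,\sqrt{\rho}v,\sqrt{p}$ for the compressible Euler equations with density $\rho$, velocities $u,v$, pressure $p$, and ratio of specific heats $\gamma$. $\otimes$ denotes the Kronecker product and $I_k$ the $k\times k$ identity. *)

(* Defs.v *)
From HB Require Import structures.
From mathcomp Require Import all_boot all_order all_algebra.
From mathcomp Require Import all_classical all_reals all_analysis.
From mathcomp Require Import mxtens.
Set Implicit Arguments. Unset Strict Implicit. Unset Printing Implicit Defensive.
Import Order.TTheory GRing.Theory Num.Theory.
Local Open Scope ring_scope.

Section Defs.
Variable R : realType.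

Definition sbpB (n : nat) : 'M[R]_n :=
  \matrix_(i, j) if i == j then
                   (if (i : nat) == 0%N then -1
                    else if (i : nat) == n.-1 then 1 else 0)
                 else 0.

Definition is_SBP (n : nat) (P Q : 'M[R]_n) : Prop :=
  is_diag_mx P /\ (forall i, 0 < P i i) /\ Q + Q^T = sbpB n.

(* index of the nodal value (k, i, j) in a vector of R^{4 N M},
   consistent with the Kronecker ordering I_4 (x) I_N (x) I_M *)
Definition idx (N M : nat) (k : 'I_4) (i : 'I_N) (j : 'I_M) : 'I_(4 * N * M) :=
  mxtens_index (mxtens_index (k, i), j).

Definition nodal (N M : nat) (Phi : 'cV[R]_(4 * N * M)) (i : 'I_N) (j : 'I_M)
  : 'I_4 -> R := fun k => Phi (idx k i j) 0.

Definition boldmx (N M : nat) (F : ('I_4 -> R) -> 'M[R]_4)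
    (Phi : 'cV[R]_(4 * N * M)) : 'M[R]_(4 * N * M) :=
  \sum_(k < 4) \sum_(l < 4) \sum_(i < N) \sum_(j < M)
     F (nodal Phi i j) k l *: ((delta_mx k l *t delta_mx i i) *t delta_mx j j).

Definition mx4 (f : nat -> nat -> R) : 'M[R]_4 := \matrix_(k, l) f k l.

Definition A1 (g : R) (p : 'I_4 -> R) : 'M[R]_4 :=
  let u := p 1 / p 0 in
  (1/2) *: mx4 (fun k l => match k, l with
    | 0%N, 0%N | 1%N, 1%N | 2%N, 2%N => u
    | 3%N, 1%N => 2 * (g - 1) * (p 3 / p 0)
    | 3%N, 3%N => (2 - g) * u
    | _, _ => 0 end).

Definition A2 (g : R) (p : 'I_4 -> R) : 'M[R]_4 :=
  let u := p 1 / p 0 in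
  (1/2) *: mx4 (fun k l => match k, l with
    | 0%N, 0%N | 1%N, 1%N | 2%N, 2%N => u
    | 1%N, 3%N => 4 * (p 3 / p 0)
    | 3%N, 3%N => (2 - g) * u
    | _, _ => 0 end).

Definition B1 (g : R) (p : 'I_4 -> R) : 'M[R]_4 :=
  let v := p 2 / p 0 in
  (1/2) *: mx4 (fun k l => match k, l with
    | 0%N, 0%N | 1%N, 1%N | 2%N, 2%N => v
    | 3%N, 2%N => 2 * (g - 1) * (p 3 / p 0)
    | 3%N, 3%N => (2 - g) * v
    | _, _ => 0 end).

Definition B2 (g : R) (p : 'I_4 -> R) : 'M[R]_4 :=
  let v := p 2 / p 0 in
  (1/2) *: mx4 (fun k l => match k, l with
    | 0%N, 0%N | 1%N, 1%N | 2%N, 2%N => v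
    | 2%N, 3%N => 4 * (p 3 / p 0)
    | 3%N, 3%N => (2 - g) * v
    | _, _ => 0 end).

Definition Pmat (g alpha2 : R) : 'M[R]_4 :=
  mx4 (fun k l => match k, l with
    | 0%N, 0%N => alpha2
    | 1%N, 1%N | 2%N, 2%N => (g - 1) / 2
    | 3%N, 3%N => 1
    | _, _ => 0 end).

End Defs.

(* Main.v *)
Require Import Defs.
From HB Require Import structures.
From mathcomp Require Import all_boot all_order all_algebra.
From mathcomp Require Import all_classical all_reals all_analysis.
From mathcomp Require Import mxtens.
From mathcomp Require Import ring lra.
Import Order.TTheory GRing.Theory Num.Theory numFieldNormedType.Exports.
Local Open Scope classical_set_scope.
Local Open Scope ring_scope.

Lemma quad_derive (R : realType) n (H : 'M[R]_n) (Phi : R -> 'cV[R]_n) t :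
  derivable Phi t 1 ->
  derivable (fun s => ((Phi s)^T *m H *m Phi s) 0 0) t 1 /\
  derive1 (fun s => ((Phi s)^T *m H *m Phi s) 0 0) t =
    ((derive1 Phi t)^T *m H *m Phi t + (Phi t)^T *m H *m derive1 Phi t) 0 0.
Proof.
move=> dP.
pose F (b : 'I_n) : R -> R := fun s : R => Phi s b 0.
have dF b : derivable (F b) t 1 by move/derivable_mxP: dP; apply.
have DF b : 'D_1 (F b) t = derive1 Phi t b 0.
  by rewrite derive1E derive_mx // mxE.
have iF b : is_derive t (1:R) (F b) (derive1 Phi t b 0) by apply: DeriveDef.
pose G := \sum_(a < n) \sum_(b < n) ((cst (H a b)) * F a * F b).
have EG : (fun s => ((Phi s)^T *m H *m Phi s) 0 0) = G.
  apply/funext => s; rewrite /G fct_sumE.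
  rewrite !mxE; under eq_bigr do rewrite !mxE big_distrl /=.
  rewrite exchange_big /=; apply: eq_bigr => a _.
  rewrite fct_sumE; apply: eq_bigr => b _ /=.
  by rewrite !mxE [Phi s a 0 * _]mulrC.
have iP a b := is_deriveM (is_deriveM (@is_derive_cst R R R (H a b) t 1) (iF a)) (iF b).
have iG := is_derive_sum (fun a => is_derive_sum (fun b => iP a b)).
rewrite EG; split; first exact: (@ex_derive _ _ _ _ _ _ _ iG).
rewrite derive1E (@derive_val _ _ _ _ _ _ _ iG).
rewrite !mxE; under [X in _ = X + _]eq_bigr do rewrite !mxE big_distrl /=.
under [X in _ = _ + X]eq_bigr do rewrite !mxE big_distrl /=.
rewrite [X in _ = X + _]exchange_big [X in _ = _ + X]exchange_big /= -big_split /=.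
apply: eq_bigr => a _; rewrite -big_split /=; apply: eq_bigr => b _.
rewrite !mxE /F /= scaler0 addr0 /GRing.scale /=.
have -> : (cst (H a b) * (fun s : R => Phi s a 0)) t = H a b * Phi t a 0 by [].
ring.
Qed.

Lemma ord_neq n (a b : 'I_n) : a != b -> (a != b :> nat).
Proof. by []. Qed.

Lemma diag_mul_delta (R : comPzRingType) n p (D : 'M[R]_n) (k : 'I_n) (l : 'I_p) :
  is_diag_mx D -> D *m delta_mx k l = D k k *: delta_mx k l.
Proof.
move=> /is_diag_mxP dD; apply/matrixP => a b; rewrite !mxE (bigD1 k) //= big1.
  rewrite !mxE eqxx /= addr0; case: (eqVneq a k) => [->|ak] /=; first by rewrite mulrC.
  by rewrite dD ?mul0r ?mulr0.
by move=> c ck; rewrite !mxE (negbTE ck) mulr0.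
Qed.

Lemma delta_mul_diag (R : comPzRingType) n p (D : 'M[R]_n) (k : 'I_p) (l : 'I_n) :
  is_diag_mx D -> delta_mx k l *m D = D l l *: delta_mx k l.
Proof.
move=> /is_diag_mxP dD; apply/matrixP => a b; rewrite !mxE (bigD1 l) //= big1.
  rewrite !mxE eqxx andbT addr0; case: (eqVneq b l) => [->|bl] /=.
    by rewrite andbT mulrC.
  rewrite andbF mulr0 (dD l b) ?mulr0 //; apply: ord_neq; by rewrite eq_sym.
by move=> c cl; rewrite !mxE (negbTE cl) andbF mul0r.
Qed.

Lemma diag_tr (R : comPzRingType) n (D : 'M[R]_n) : is_diag_mx D -> D^T = D.
Proof.
move=> /is_diag_mxP dD; apply/matrixP => a b; rewrite !mxE.
case: (eqVneq a b) => [->//|ab]; rewrite !dD //; apply: ord_neq => //; by rewrite eq_sym.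
Qed.

Lemma tensmxZl (R : comPzRingType) m n p q (a : R) (A : 'M[R]_(m,n)) (B : 'M[R]_(p,q)) :
  (a *: A) *t B = a *: (A *t B).
Proof. by apply/matrixP => i j; rewrite !mxE mulrA. Qed.

Lemma tensmxDr (R : comPzRingType) m n p q (A : 'M[R]_(m,n)) (B C : 'M[R]_(p,q)) :
  A *t (B + C) = A *t B + A *t C.
Proof. by apply/matrixP => i j; rewrite !mxE mulrDr. Qed.

Lemma tensmxDl (R : comPzRingType) m n p q (A B : 'M[R]_(m,n)) (C : 'M[R]_(p,q)) :
  (A + B) *t C = A *t C + B *t C.
Proof. by apply/matrixP => i j; rewrite !mxE mulrDl. Qed.

Lemma diag_unit (R : realType) n (D : 'M[R]_n) :
  is_diag_mx D -> (forall i, 0 < D i i) -> D \in unitmx.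
Proof.
move=> /is_diag_mxP dD pD.
have -> : D = diag_mx (\row_i D i i).
  apply/matrixP => a b; rewrite !mxE; case: (eqVneq a b) => [->|ab].
    by rewrite mulr1n.
  by rewrite mulr0n dD.
rewrite unitmxE det_diag unitfE; apply/prodf_neq0 => i _.
by rewrite mxE gt_eqF.
Qed.

Lemma Pmat_diag (R : realType) (g a : R) : is_diag_mx (Pmat g a).
Proof.
apply/is_diag_mxP => i j; rewrite /Pmat !mxE.
by case: i => [[|[|[|[|i]]]] Hi] //; case: j => [[|[|[|[|j]]]] Hj].
Qed.

Lemma coefA (R : realType) (g a : R) (p : 'I_4 -> R) k l :
  Pmat g a k k * A2 g p k l = A1 g p l k * Pmat g a l l.
Proof.
rewrite /Pmat /A1 /A2 /mx4 !mxE.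
move: (p 0)^-1 => y.
case: k => [[|[|[|[|k]]]] Hk] //; case: l => [[|[|[|[|l]]]] Hl] //=;
  field; rewrite ?pnatr_eq0 //.
Qed.

Lemma coefB (R : realType) (g a : R) (p : 'I_4 -> R) k l :
  Pmat g a k k * B2 g p k l = B1 g p l k * Pmat g a l l.
Proof.
rewrite /Pmat /B1 /B2 /mx4 !mxE.
move: (p 0)^-1 => y.
case: k => [[|[|[|[|k]]]] Hk] //; case: l => [[|[|[|[|l]]]] Hl] //=;
  field; rewrite ?pnatr_eq0 //.
Qed.

Lemma bold_comm (R : realType) N M (D1 : 'M[R]_N) (D2 : 'M[R]_M) F
   (Phi : 'cV[R]_(4 * N * M)) :
  is_diag_mx D1 -> is_diag_mx D2 ->
  (((1%:M : 'M[R]_4) *t D1) *t D2) *m boldmx F Phi =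
  boldmx F Phi *m (((1%:M : 'M[R]_4) *t D1) *t D2).
Proof.
move=> d1 d2; rewrite /boldmx mulmx_sumr mulmx_suml; apply: eq_bigr => k _.
rewrite mulmx_sumr mulmx_suml; apply: eq_bigr => l _.
rewrite mulmx_sumr mulmx_suml; apply: eq_bigr => i _.
rewrite mulmx_sumr mulmx_suml; apply: eq_bigr => j _.
rewrite -scalemxAr -scalemxAl !tensmx_mul mul1mx mulmx1.
by rewrite !diag_mul_delta // !delta_mul_diag. 
Qed.

Lemma bold_sym (R : realType) N M (P : 'M[R]_4) (F G : ('I_4 -> R) -> 'M[R]_4) (Phi : 'cV[R]_(4 * N * M)) :
  is_diag_mx P ->
  (forall p k l, P k k * G p k l = F p l k * P l l) ->
  ((P *t (1%:M : 'M[R]_N)) *t (1%:M : 'M[R]_M)) *m boldmx G Phi =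
  (boldmx F Phi)^T *m ((P *t (1%:M : 'M[R]_N)) *t (1%:M : 'M[R]_M)).
Proof.
move=> dP cP.
pose T (k l : 'I_4) (i : 'I_N) (j : 'I_M) : 'M[R]_(4 * N * M) :=
  (delta_mx k l *t delta_mx i i) *t delta_mx j j.
have -> : ((P *t (1%:M : 'M[R]_N)) *t (1%:M : 'M[R]_M)) *m boldmx G Phi =
  \sum_(k < 4) \sum_(l < 4) \sum_(i < N) \sum_(j < M)
     (P k k * G (nodal Phi i j) k l) *: T k l i j.
  rewrite /boldmx mulmx_sumr; apply: eq_bigr => k _.
  rewrite mulmx_sumr; apply: eq_bigr => l _.
  rewrite mulmx_sumr; apply: eq_bigr => i _.
  rewrite mulmx_sumr; apply: eq_bigr => j _.
  rewrite -scalemxAr !tensmx_mul !mul1mx diag_mul_delta // !tensmxZl scalerA.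
  by rewrite mulrC.
have -> : (boldmx F Phi)^T *m ((P *t (1%:M : 'M[R]_N)) *t (1%:M : 'M[R]_M)) =
  \sum_(k < 4) \sum_(l < 4) \sum_(i < N) \sum_(j < M)
     (F (nodal Phi i j) k l * P k k) *: T l k i j.
  rewrite /boldmx linear_sum mulmx_suml; apply: eq_bigr => k _.
  rewrite linear_sum mulmx_suml; apply: eq_bigr => l _.
  rewrite linear_sum mulmx_suml; apply: eq_bigr => i _.
  rewrite linear_sum mulmx_suml; apply: eq_bigr => j _.
  rewrite linearZ /= -scalemxAl !trmx_tens !trmx_delta !tensmx_mul !mulmx1.
  by rewrite delta_mul_diag // !tensmxZl scalerA.
rewrite [RHS]exchange_big /=; apply: eq_bigr => k _; apply: eq_bigr => l _.
apply: eq_bigr => i _; apply: eq_bigr => j _.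
by rewrite cP.
Qed.

Theorem mainTheorem3 (R : realType) (g alpha2 : R) (N M : nat)
  (Px Qx : 'M[R]_N) (Py Qy : 'M[R]_M) (I : set R) (Phi : R -> 'cV[R]_(4 * N * M)) :
  1 < g -> 0 < alpha2 -> (2 <= N)%N -> (2 <= M)%N ->
  is_SBP Px Qx -> is_SBP Py Qy -> open I ->
  let Dx := invmx Px *m Qx in
  let Dy := invmx Py *m Qy in
  let bDx := ((1%:M : 'M[R]_4) *t Dx) *t (1%:M : 'M[R]_M) in
  let bDy := ((1%:M : 'M[R]_4) *t (1%:M : 'M[R]_N)) *t Dy in
  let tP := ((1%:M : 'M[R]_4) *t Px) *t Py in
  let bP := (Pmat g alpha2 *t (1%:M : 'M[R]_N)) *t (1%:M : 'M[R]_M) in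
  let bBx := ((1%:M : 'M[R]_4) *t sbpB R N) *t Py in
  let bBy := ((1%:M : 'M[R]_4) *t Px) *t sbpB R M in
  (forall t, I t -> forall i j, Phi t (idx 0 i j) 0 != 0) ->
  (forall t, I t -> derivable Phi t 1) ->
  (forall t, I t ->
     derive1 Phi t + bDx *m (boldmx (A1 g) (Phi t) *m Phi t)
       + boldmx (A2 g) (Phi t) *m (bDx *m Phi t)
       + bDy *m (boldmx (B1 g) (Phi t) *m Phi t)
       + boldmx (B2 g) (Phi t) *m (bDy *m Phi t) = 0) ->
  let E := fun s => ((Phi s)^T *m (bP *m tP) *m Phi s) 0 0 in
  forall t, I t ->
    let tA := 2 *: (bP *m boldmx (A1 g) (Phi t)) in
    let tB := 2 *: (bP *m boldmx (B1 g) (Phi t)) in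
    derivable E t 1 /\
    derive1 E t + ((Phi t)^T *m (bBx *m tA + bBy *m tB) *m Phi t) 0 0 = 0.
Proof.
move=> g1 a0 N2 M2 [dPx [pPx sQx]] [dPy [pPy sQy]] oI Dx Dy bDx bDy tP bP bBx bBy
  nz dPhi heq E t It tA tB.
have [dE DE] := quad_derive _ _ (bP *m tP) Phi t (dPhi t It).
split; first exact: dE.
rewrite [derive1 E t]DE.
set X := derive1 Phi t; set F := Phi t.
set bA1 := boldmx (A1 g) F; set bA2 := boldmx (A2 g) F.
set bB1 := boldmx (B1 g) F; set bB2 := boldmx (B2 g) F.
have HX : X = - (bDx *m (bA1 *m F) + bA2 *m (bDx *m F) + bDy *m (bB1 *m F)
                 + bB2 *m (bDy *m F)).
  by apply/eqP; rewrite -addr_eq0 !addrA; apply/eqP; exact: heq.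
have uPx : Px \in unitmx by apply: diag_unit.
have uPy : Py \in unitmx by apply: diag_unit.
pose Qxb := ((1%:M : 'M[R]_4) *t Qx) *t Py.
pose Qyb := ((1%:M : 'M[R]_4) *t Px) *t Qy.
have K3 : tP *m bDx = Qxb.
  by rewrite /tP /bDx /Qxb !tensmx_mul !mulmx1 /Dx mulmxA mulmxV // mul1mx.
have K3y : tP *m bDy = Qyb.
  by rewrite /tP /bDy /Qyb !tensmx_mul !mulmx1 /Dy mulmxA mulmxV // mul1mx.
have bPT : bP^T = bP.
  by rewrite /bP !trmx_tens !trmx1 diag_tr // Pmat_diag.
have PW : bP *m tP = tP *m bP.
  by rewrite /bP /tP !tensmx_mul !mulmx1 !mul1mx.
have Hsym : (bP *m tP)^T = bP *m tP.
  by rewrite trmx_mul bPT /tP !trmx_tens !trmx1 !diag_tr // PW.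
have K1 : bP *m tP *m bDx = Qxb *m bP by rewrite -mulmxA K3 /bP /Qxb !tensmx_mul !mulmx1 !mul1mx.
have K1y : bP *m tP *m bDy = Qyb *m bP by rewrite -mulmxA K3y /bP /Qyb !tensmx_mul !mulmx1 !mul1mx.
have K4 : bBx = Qxb + Qxb^T.
  by rewrite /bBx /Qxb !trmx_tens !trmx1 (@diag_tr _ _ Py dPy) -tensmxDl -tensmxDr sQx.
have K4y : bBy = Qyb + Qyb^T.
  by rewrite /bBy /Qyb !trmx_tens !trmx1 (@diag_tr _ _ Px dPx) -tensmxDr sQy.
have F3 : bP *m bA2 = bA1^T *m bP.
  by apply: bold_sym; [exact: Pmat_diag | move=> *; exact: coefA].
have F3y : bP *m bB2 = bB1^T *m bP.
  by apply: bold_sym; [exact: Pmat_diag | move=> *; exact: coefB].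
have F4 : tP *m bA2 = bA2 *m tP by apply: bold_comm.
have F4y : tP *m bB2 = bB2 *m tP by apply: bold_comm.
pose C := bP *m bA1; pose Cy := bP *m bB1.
have E1 : bP *m tP *m (bDx *m (bA1 *m F)) = Qxb *m C *m F.
  by rewrite !mulmxA K1.
have E1y : bP *m tP *m (bDy *m (bB1 *m F)) = Qyb *m Cy *m F.
  by rewrite !mulmxA K1y.
have E2 : bP *m tP *m (bA2 *m (bDx *m F)) = C^T *m Qxb *m F.
  have G1 : bP *m tP *m bA2 = bA1^T *m bP *m tP by rewrite -mulmxA F4 mulmxA F3.
  rewrite !mulmxA G1 -(mulmxA _ tP bDx) K3 /C trmx_mul bPT.
  by rewrite ?mulmxA.
have E2y : bP *m tP *m (bB2 *m (bDy *m F)) = Cy^T *m Qyb *m F.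
  have G1 : bP *m tP *m bB2 = bB1^T *m bP *m tP by rewrite -mulmxA F4y mulmxA F3y.
  rewrite !mulmxA G1 -(mulmxA _ tP bDy) K3y /Cy trmx_mul bPT.
  by rewrite ?mulmxA.
pose q (A : 'M[R]_(4 * N * M)) := (F^T *m A *m F) 0 0.
have scalE a (A : 'M[R]_1) : (a *: A) 0 0 = a * A 0 0 by rewrite mxE.
have oppE (A : 'M[R]_1) : (- A) 0 0 = - A 0 0 by rewrite mxE.
have addE (A B : 'M[R]_1) : (A + B) 0 0 = A 0 0 + B 0 0 by rewrite mxE.
have qD A B : q (A + B) = q A + q B by rewrite /q mulmxDr mulmxDl addE.
have qZ a A : q (a *: A) = a * q A by rewrite /q -scalemxAr -scalemxAl scalE.
have qT A : q A^T = q A.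
  by rewrite /q -[in RHS](trmxK (F^T *m A *m F)) [in RHS]mxE !trmx_mul trmxK mulmxA.
rewrite addE.
have -> : ((X^T *m (bP *m tP) *m F) 0 0) = (F^T *m (bP *m tP) *m X) 0 0.
  by rewrite -[in LHS](trmxK (X^T *m _ *m F)) [in LHS]mxE !trmx_mul trmxK -trmx_mul Hsym mulmxA.
have -> : (F^T *m (bP *m tP) *m X) 0 0 =
   - q (Qxb *m C + C^T *m Qxb + Qyb *m Cy + Cy^T *m Qyb).
  rewrite HX -mulmxA !mulmxN !mulmxDr E1 E2 E1y E2y /q oppE.
  by rewrite !mulmxDr !mulmxDl !mulmxA.
have -> : (F^T *m (bBx *m tA + bBy *m tB) *m F) 0 0 =
   q (2 *: ((Qxb + Qxb^T) *m C + (Qyb + Qyb^T) *m Cy)).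
  by rewrite /q /tA /tB -K4 -K4y -!scalemxAr -scalerDr scalemxAr.
rewrite !qD qZ !qD.
have -> : q (C^T *m Qxb) = q (Qxb^T *m C) by rewrite -qT trmx_mul trmxK.
have -> : q (Cy^T *m Qyb) = q (Qyb^T *m Cy) by rewrite -qT trmx_mul trmxK.
rewrite !mulmxDl !qD.
lra.
Qed.
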